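(* Let $L$ be a normal incline and let $A$ be an $n\times n$ completely positive matrix over $L$ such that every right almost principal $2\times 2$ submatrix of $A$ has positive determinant greater than or equal to its negative determinant. Then $A$ is LU-completely positive.
   Context: An incline is a nonempty set $L$ with binary operations $\oplus,\otimes$ such that $(L,\oplus)$ is a semilattice ($\oplus$ associative, commutative, idempotent), $(L,\otimes)$ is a semigroup, $x\otimes(y\oplus z)=(x\otimes y)\oplus(x\otimes z)$ and $x\oplus(x\otimes y)=x$ for all $x,y,z$. The order is $x\le y\iff x\oplus y=y$; $L$ is commutative if $\otimes$ is commutative. An r-ideal is a nonempty $J\subseteq L$ closed under $\oplus$ and under multiplication by arbitrary elements of $L$; a lattice ideal is a nonempty $J\subseteq L$ closed under $\oplus$ and downward closed. A commutative incline $L$ is normal if it has an additive identity $\mathbf{0}$ and a multiplicative identity $\mathbf{1}$ and: every singly generated r-ideal is a lattice ideal (LI-property); for each $x$ there is a unique $c$ with $c\otimes c=x$; $x\otimes y\le(x\otimes x)\oplus(y\otimes y)$ for all $x,y$. Matrix product: $(BC)_{ij}=\bigoplus_k b_{ik}\otimes c_{kj}$; $B^T$ is the transpose. $A$ is completely positive if $A=BB^T$ for some $n\times k$ matrix $B$ over $L$ all of whose entries are of the form $c\otimes c$. $A$ is LU-completely positive if $A=CC^T$ for some lower triangular $n\times n$ matrix $C$ over $L$. For index sets $\alpha=\{\alpha_1<\dots<\alpha_k\}$, $\beta=\{\beta_1<\dots<\beta_k\}$, $A[\alpha|\beta]$ is the submatrix with $(i,j)$ entry $a_{\alpha_i\beta_j}$;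 it is right almost principal if $\alpha_j=\beta_j$ for $1\le j\le k-1$ but $\alpha_k\ne\beta_k$. For a $2\times 2$ matrix $\begin{bmatrix}p&q\\ r&s\end{bmatrix}$, the positive determinant is $p\otimes s$ and the negative determinant is $q\otimes r$. *)

(* Defs.v *)
From mathcomp Require Import all_boot all_algebra.
Set Implicit Arguments. Unset Strict Implicit. Unset Printing Implicit Defensive.

Section Incline.
Variables (T : Type) (add mul : T -> T -> T).

Definition is_incline : Prop :=
  ((forall x y z, add x (add y z) = add (add x y) z) /\
      (forall x y, add x y = add y x) /\
      (forall x, add x x = x) /\
      (forall x y z, mul x (mul y z) = mul (mul x y) z) /\
      (forall x y z, mul x (add y z) = add (mul x y) (mul x z)) /\
      (forall x y, add x (mul x y) = x)).

Definition ile (x y : T) : Prop := add x y = y.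

Definition is_commutative : Prop := forall x y, mul x y = mul y x.

Definition r_ideal (J : T -> Prop) : Prop :=
  ((exists x, J x) /\
      (forall x y, J x -> J y -> J (add x y)) /\
      (forall x r, J x -> J (mul r x) /\ J (mul x r))).

Definition lattice_ideal (J : T -> Prop) : Prop :=
  ((exists x, J x) /\
      (forall x y, J x -> J y -> J (add x y)) /\
      (forall x y, J y -> ile x y -> J x)).

Definition r_ideal_gen (a : T) : T -> Prop :=
  fun x => forall J, r_ideal J -> J a -> J x.

Definition normal_incline (zero one : T) : Prop :=
  (is_incline /\
      is_commutative /\
      (forall x, add zero x = x) /\
      (forall x, mul one x = x /\ mul x one = x) /\
      (forall a, lattice_ideal (r_ideal_gen a)) /\
      (forall x, exists! c, mul c c = x) /\
      (forall x y, ile (mul x y) (add (mul x x) (mul y y)))).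

Definition imulmx (zero : T) m k p (B : 'M[T]_(m, k)) (C : 'M[T]_(k, p))
  : 'M[T]_(m, p) :=
  \matrix_(i, j) \big[add/zero]_(l < k) mul (B i l) (C l j).

Definition completely_positive (zero : T) n (A : 'M[T]_n) : Prop :=
  exists k (B : 'M[T]_(n, k)),
    (forall i j, exists c, B i j = mul c c) /\ A = imulmx zero B B^T.

Definition lower_triangular (zero : T) n (C : 'M[T]_n) : Prop :=
  forall i j : 'I_n, (i < j)%N -> C i j = zero.

Definition LU_completely_positive (zero : T) n (A : 'M[T]_n) : Prop :=
  exists C : 'M[T]_n, lower_triangular zero C /\ A = imulmx zero C C^T.

(* every right almost principal 2x2 submatrix A[{i<j}|{i<l}], j <> l,
   has positive determinant a_ii a_jl >= negative determinant a_il a_ji *)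
Definition rap2_condition n (A : 'M[T]_n) : Prop :=
  forall i j l : 'I_n, (i < j)%N -> (i < l)%N -> j != l ->
    ile (mul (A i l) (A j i)) (mul (A i i) (A j l)).

End Incline.

(* Main.v *)
Require Import Defs.
From mathcomp Require Import all_boot all_algebra.
From Stdlib Require Import IndefiniteDescription.
Set Implicit Arguments. Unset Strict Implicit. Unset Printing Implicit Defensive.

Lemma choice_fun (A B : Type) (R : A -> B -> Prop) :
  (forall a, exists b, R a b) -> exists f : A -> B, forall a, R a (f a).
Proof.
move=> H.
exists (fun a => proj1_sig (constructive_indefinite_description _ (H a))).
move=> a; exact: (proj2_sig (constructive_indefinite_description _ (H a))).
Qed.

Lemma ord_neq n (a b : 'I_n) : (b < a)%N -> (a == b) = false.
Proof. move=> h; apply/negbTE; apply/eqP => e; by move: h; rewrite e ltnn. Qed.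

Section Inc.
Variables (T : Type) (add mul : T -> T -> T) (zero one : T).
Hypothesis HN : normal_incline add mul zero one.

Local Notation "x ⊕ y" := (add x y) (at level 50, left associativity).
Local Notation "x ⊗ y" := (mul x y) (at level 40, left associativity).
Local Notation "x ≼ y" := (ile add x y) (at level 70, no associativity).

Lemma addA x y z : x ⊕ (y ⊕ z) = (x ⊕ y) ⊕ z.
Proof. by case: HN => [[h _] _]; apply h. Qed.
Lemma addC x y : x ⊕ y = y ⊕ x.
Proof. by case: HN => [[_ [h _]] _]; apply h. Qed.
Lemma addI x : x ⊕ x = x.
Proof. by case: HN => [[_ [_ [h _]]] _]; apply h. Qed.
Lemma mulA x y z : x ⊗ (y ⊗ z) = (x ⊗ y) ⊗ z.
Proof. by case: HN => [[_ [_ [_ [h _]]]] _]; apply h. Qed.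
Lemma mulD x y z : x ⊗ (y ⊕ z) = x ⊗ y ⊕ x ⊗ z.
Proof. by case: HN => [[_ [_ [_ [_ [h _]]]]] _]; apply h. Qed.
Lemma absorb x y : x ⊕ x ⊗ y = x.
Proof. by case: HN => [[_ [_ [_ [_ [_ h]]]]] _]; apply h. Qed.
Lemma mulC x y : x ⊗ y = y ⊗ x.
Proof. by case: HN => [_ [h _]]; apply h. Qed.
Lemma add0 x : zero ⊕ x = x.
Proof. by case: HN => [_ [_ [h _]]]; apply h. Qed.
Lemma mul1r x : one ⊗ x = x.
Proof. by case: HN => [_ [_ [_ [h _]]]]; apply h. Qed.
Lemma mulr1 x : x ⊗ one = x.
Proof. by case: HN => [_ [_ [_ [h _]]]]; apply h. Qed.
Lemma LIh a : lattice_ideal add (r_ideal_gen add mul a).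
Proof. by case: HN => [_ [_ [_ [_ [h _]]]]]; apply h. Qed.
Lemma sqh x : exists! c, c ⊗ c = x.
Proof. by case: HN => [_ [_ [_ [_ [_ [h _]]]]]]; apply h. Qed.
Lemma normh x y : x ⊗ y ≼ x ⊗ x ⊕ y ⊗ y.
Proof. by case: HN => [_ [_ [_ [_ [_ [_ h]]]]]]; apply h. Qed.

Lemma le_refl x : x ≼ x.
Proof. exact: addI. Qed.
Lemma le_antisym x y : x ≼ y -> y ≼ x -> x = y.
Proof. rewrite /ile => h1 h2; by rewrite -h2 addC h1. Qed.
Lemma le_trans x y z : x ≼ y -> y ≼ z -> x ≼ z.
Proof. rewrite /ile => h1 h2; by rewrite -h2 addA h1. Qed.
Lemma le_addl x y : x ≼ x ⊕ y.
Proof. by rewrite /ile addA addI. Qed.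
Lemma le_addr x y : y ≼ x ⊕ y.
Proof. rewrite addC; exact: le_addl. Qed.
Lemma add_lub x y z : x ≼ z -> y ≼ z -> x ⊕ y ≼ z.
Proof. rewrite /ile => h1 h2; by rewrite -addA h2 h1. Qed.
Lemma mulDl x y z : (x ⊕ y) ⊗ z = x ⊗ z ⊕ y ⊗ z.
Proof. by rewrite mulC mulD (mulC z x) (mulC z y). Qed.
Lemma mul_lel x y : x ⊗ y ≼ x.
Proof. by rewrite /ile addC absorb. Qed.
Lemma mul_ler x y : x ⊗ y ≼ y.
Proof. rewrite mulC; exact: mul_lel. Qed.
Lemma mul_monol x y z : x ≼ y -> x ⊗ z ≼ y ⊗ z.
Proof. rewrite /ile => h; by rewrite -mulDl h. Qed.
Lemma mul_monor z x y : x ≼ y -> z ⊗ x ≼ z ⊗ y.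
Proof. rewrite /ile => h; by rewrite -mulD h. Qed.
Lemma mul_mono x x' y y' : x ≼ x' -> y ≼ y' -> x ⊗ y ≼ x' ⊗ y'.
Proof. move=> h1 h2; apply: le_trans (mul_monol y h1) (mul_monor x' h2). Qed.
Lemma le0 x : zero ≼ x.
Proof. exact: add0. Qed.
Lemma mul0 x : zero ⊗ x = zero.
Proof. apply: le_antisym; [exact: mul_lel | exact: le0]. Qed.
Lemma mulr0 x : x ⊗ zero = zero.
Proof. by rewrite mulC mul0. Qed.
Lemma mulACA a b c d : (a ⊗ b) ⊗ (c ⊗ d) = (a ⊗ c) ⊗ (b ⊗ d).
Proof. by rewrite -!mulA (mulA b c d) (mulC b c) -(mulA c b d). Qed.

Lemma sq_inj p q : p ⊗ p = q ⊗ q -> p = q.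
Proof.
move=> h; case: (sqh (q ⊗ q)) => c [_ Hu].
by rewrite -(Hu p h) -(Hu q erefl).
Qed.
Lemma sqrt_ex x : exists c, c ⊗ c = x.
Proof. by case: (sqh x) => c [h _]; exists c. Qed.

Lemma sq_embed p q : p ⊗ p ≼ q ⊗ q -> p ≼ q.
Proof.
move=> h; rewrite /ile; apply: sq_inj.
apply: le_antisym; last first.
  rewrite mulDl !mulD; exact: le_trans (le_addr _ (q ⊗ q)) (le_addr _ _).
rewrite mulDl !mulD.
have hpq : p ⊗ q ≼ q ⊗ q.
  apply: le_trans (normh p q) _; apply: add_lub => //; exact: le_refl.
apply: add_lub; apply: add_lub => //; last exact: le_refl.
by rewrite mulC.
Qed.

Lemma LI a x : x ≼ a -> exists r, x = a ⊗ r.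
Proof.
move=> H; case: (LIh a) => _ [_ Hdown].
have Ha : r_ideal_gen add mul a a by move=> J _; apply.
have Hx := Hdown x a Ha H.
apply: (Hx (fun z => exists r, z = a ⊗ r)).
  split; first by exists a; exists one; rewrite mulr1.
  split; first by move=> _ _ [r1 ->] [r2 ->]; exists (r1 ⊕ r2); rewrite mulD.
  move=> _ r0 [r ->]; split.
    by exists (r0 ⊗ r); rewrite mulA (mulC r0 a) -mulA.
  by exists (r ⊗ r0); rewrite mulA.
by exists one; rewrite mulr1.
Qed.

Lemma fix_sqrt t w c : t ⊗ w = w -> c ⊗ c = w -> t ⊗ c = c.
Proof.
move=> h hc; apply: sq_inj.
by rewrite mulACA hc -mulA h h.
Qed.

Lemma fix_down t w z : t ⊗ w = w -> z ≼ w -> t ⊗ z = z.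
Proof. move=> h /LI [r ->]; by rewrite mulA h. Qed.

Lemma CL' d v a : a ≼ v -> d ⊗ v = d ⊗ a ->
  exists e, d ⊗ e = d /\ v ⊗ e ≼ a.
Proof.
move=> hav hd.
case: (LI hav) => t ht.
case: (LI (le_addl d v)) => f hf.
have h1 : d ⊗ a = (d ⊗ a) ⊗ t by rewrite -hd -mulA -ht hd.
have hfix : t ⊗ (d ⊗ a) = d ⊗ a by rewrite mulC -h1.
have hdeq : d = d ⊗ f ⊕ v ⊗ f by rewrite {1}hf mulDl.
have hzd : v ⊗ f ≼ d by rewrite {1}hdeq; exact: le_addr.
have hzz : (v ⊗ f) ⊗ (v ⊗ f) ≼ d ⊗ a.
  rewrite -hd (mulC d v); exact: mul_mono (mul_lel v f) hzd.
case: (sqrt_ex (d ⊗ a)) => c hc.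
have hzc : v ⊗ f ≼ c by apply: sq_embed; rewrite hc.
have htc : t ⊗ c = c by apply: fix_sqrt hfix hc.
have htz : t ⊗ (v ⊗ f) = v ⊗ f by apply: fix_down htc hzc.
have hza : v ⊗ f ≼ a.
  rewrite -htz mulA (mulC t v) -ht; exact: mul_lel.
exists (t ⊕ f); split.
  apply: le_antisym.
    rewrite mulD; apply: add_lub; exact: mul_lel.
  rewrite mulD {1}hdeq; apply: add_lub; first exact: le_addr.
  apply: le_trans (le_addl (d ⊗ t) (d ⊗ f)).
  rewrite -htz mulC; exact: mul_monol.
rewrite mulD -ht; apply: add_lub => //; exact: le_refl.
Qed.

Lemma CL d u a : (d ⊗ d) ⊗ u ≼ (d ⊗ d) ⊗ a ->
  exists e, d ⊗ e = d /\ u ⊗ e ≼ a.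
Proof.
move=> h.
have hd : (d ⊗ d) ⊗ (a ⊕ u) = (d ⊗ d) ⊗ a by rewrite mulD addC.
case: (CL' (le_addl a u) hd) => e [he1 he2].
exists e; split.
  rewrite mulC; apply: (fix_sqrt (w := d ⊗ d)) => //; by rewrite mulC.
apply: le_trans he2; apply: mul_monol; exact: le_addr.
Qed.


Lemma fold_fix (I : eqType) (e : I -> T) d s :
  (forall p, d ⊗ e p = d) -> d ⊗ foldr (fun p acc => e p ⊗ acc) one s = d.
Proof.
move=> He; elim: s => [|p s IH] /=; first exact: mulr1.
by rewrite mulA He IH.
Qed.

Lemma fold_le (I : eqType) (e : I -> T) s p :
  p \in s -> foldr (fun p acc => e p ⊗ acc) one s ≼ e p.
Proof.
elim: s => [|q s IH] //=; rewrite in_cons; case/orP => [/eqP <-|hp].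
  exact: mul_lel.
apply: le_trans (mul_ler _ _) (IH hp).
Qed.

Lemma key (I : finType) (P : pred I) (d : T) (x : I -> T) (a : I -> I -> T) :
  (forall i l, P i -> P l -> x i ⊗ x l ≼ (d ⊗ d) ⊗ a i l) ->
  exists y : I -> T, (forall i, P i -> d ⊗ y i = x i) /\
    (forall i l, P i -> P l -> y i ⊗ y l ≼ a i l).
Proof.
move=> H.
have hr : forall i, exists r, P i -> x i = d ⊗ r.
  move=> i; case Pi: (P i); last by exists one.
  have : x i ≼ d.
    apply: sq_embed; apply: le_trans (H i i Pi Pi) _; exact: mul_lel.
  by case/LI => r hr; exists r.
case: (choice_fun hr) => r Hr.
have he : forall p : I * I, exists e, d ⊗ e = d /\
    (P p.1 -> P p.2 -> (r p.1 ⊗ r p.2) ⊗ e ≼ a p.1 p.2).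
  move=> [i l] /=.
  case Pi: (P i); last by exists one; split => //; exact: mulr1.
  case Pl: (P l); last by exists one; split => //; exact: mulr1.
  have h : (d ⊗ d) ⊗ (r i ⊗ r l) ≼ (d ⊗ d) ⊗ a i l.
    by rewrite mulACA -Hr // -Hr //; apply: H.
  case: (CL h) => e [h1 h2]; exists e; split => // _ _.
case: (choice_fun he) => e He.
pose E := foldr (fun p acc => e p ⊗ acc) one (enum [set: I * I]).
have hdE : d ⊗ E = d by apply: fold_fix => p; case: (He p).
exists (fun i => r i ⊗ E); split.
  move=> i Pi /=; by rewrite mulA (mulC d (r i)) -mulA hdE mulC -Hr.
move=> i l Pi Pl /=.
rewrite mulACA.
have hE : E ≼ e (i, l) by apply: fold_le; rewrite mem_enum in_setT.
apply: le_trans (mul_monor _ (le_trans (mul_lel E E) hE)) _.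
by case: (He (i, l)) => _ /= h; apply: h.
Qed.

Lemma sum_le k (F : 'I_k -> T) c :
  (forall l, F l ≼ c) -> \big[add/zero]_(l < k) F l ≼ c.
Proof.
move=> H; apply: (big_ind (fun x => x ≼ c)) => //; first exact: le0.
move=> x y; exact: add_lub.
Qed.

Lemma sum_ub_seq (I : eqType) (r : seq I) (F : I -> T) l :
  l \in r -> F l ≼ \big[add/zero]_(m <- r) F m.
Proof.
elim: r => [|q r IH] //; rewrite in_cons big_cons; case/orP => [/eqP ->|hl].
  exact: le_addl.
apply: le_trans (IH hl) (le_addr _ _).
Qed.

Lemma sum_ub k (F : 'I_k -> T) l : F l ≼ \big[add/zero]_(m < k) F m.
Proof. apply: sum_ub_seq; exact: mem_index_enum. Qed.


Lemma main_sec n (A : 'M[T]_n) :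
  completely_positive add mul zero A -> rap2_condition add mul A ->
  LU_completely_positive add mul zero A.
Proof.
move=> [k [B [_ HA]]] Hrap.
have Aform : forall i j, A i j = \big[add/zero]_(l < k) (B i l ⊗ B j l).
  move=> i j; rewrite HA /imulmx mxE; apply: eq_bigr => l _; by rewrite mxE.
have sym : forall i j, A i j = A j i.
  move=> i j; rewrite !Aform; apply: eq_bigr => l _; exact: mulC.
have CS : forall i j, A i j ⊗ A i j ≼ A i i ⊗ A j j.
  move=> i j; case: (sqrt_ex (A i i ⊗ A j j)) => c hc.
  suff hh : A i j ≼ c.
    rewrite -hc; exact: (mul_mono hh hh).
  rewrite (Aform i j); apply: sum_le => l; apply: sq_embed; rewrite hc mulACA.
  apply: mul_mono; rewrite Aform; exact: (sum_ub (fun m => B _ m ⊗ B _ m)).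
have [Dv HD] : exists Dv : 'I_n -> T, forall j, Dv j ⊗ Dv j = A j j.
  apply: (choice_fun (R := fun j c => c ⊗ c = A j j)) => j; exact: sqrt_ex.
have hY : forall j : 'I_n, exists y : 'I_n -> T,
    (forall i : 'I_n, (j < i)%N -> Dv j ⊗ y i = A i j) /\
    (forall i l : 'I_n, (j < i)%N -> (j < l)%N -> y i ⊗ y l ≼ A i l).
  move=> j; apply: (key (P := fun i : 'I_n => (j < i)%N)) => i l /= hi hl.
  rewrite HD; case: (eqVneq i l) => [<-|hil].
    rewrite (sym i j); exact: CS j i.
  rewrite (sym l j) mulC; exact: Hrap.
case: (choice_fun hY) => Y HY.
pose C : 'M[T]_n := (\matrix_(i, m) (if (m < i)%N then Y m i else if m == i then Dv m else zero))%R.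
have Ce : forall i m, C i m = if (m < i)%N then Y m i else if m == i then Dv m else zero.
  by move=> i m; rewrite mxE.
clearbody C.
exists C; split.
  move=> i m him; rewrite Ce ltnNge (ltnW him) /=.
  have -> : (m == i) = false by apply/negbTE; rewrite neq_ltn him orbT.
  by [].
apply/matrixP => i j; rewrite /imulmx mxE.
have -> : \big[add/zero]_(m < n) (C i m ⊗ (C^T)%R m j) = \big[add/zero]_(m < n) (C i m ⊗ C j m).
  by apply: eq_bigr => m _; rewrite mxE.
apply: le_antisym; last first.
  apply: sum_le => m; rewrite !Ce.
  case: (ltngtP m i) => hmi.
  - case: (ltngtP m j) => hmj.
    + exact: (HY m).2.
    + rewrite (ord_neq hmj) mulr0; exact: le0.
    + move/val_inj: hmj => hmj; subst j; rewrite ?ltnn ?eqxx mulC (HY m).1 //; exact: le_refl.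
  - rewrite (ord_neq hmi) mul0; exact: le0.
  - move/val_inj: hmi => hmi; subst i; rewrite ?ltnn ?eqxx; case: (ltngtP m j) => hmj.
    + rewrite (HY m).1 // sym; exact: le_refl.
    + rewrite (ord_neq hmj) mulr0; exact: le0.
    + move/val_inj: hmj => hmj; subst j; rewrite ?ltnn ?eqxx HD; exact: le_refl.
case: (leqP i j) => hij.
  have e : C i i ⊗ C j i = A i j.
    rewrite !Ce ltnn eqxx; move: hij; rewrite leq_eqVlt => /orP [/eqP hij|hij].
      have hij' : i = j by apply: val_inj.
      subst j; by rewrite ltnn eqxx HD.
    by rewrite hij (HY i).1 // sym.
  rewrite -{1}e; exact: (sum_ub (fun m => C i m ⊗ C j m)).
have e : C i j ⊗ C j j = A i j.
  by rewrite !Ce hij ltnn eqxx mulC (HY j).1.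
rewrite -{1}e; exact: (sum_ub (fun m => C i m ⊗ C j m)).
Qed.

End Inc.

Theorem mainTheorem8 (T : Type) (add mul : T -> T -> T) (zero one : T)
  (n : nat) (A : 'M[T]_n) :
  normal_incline add mul zero one ->
  completely_positive add mul zero A ->
  rap2_condition add mul A ->
  LU_completely_positive add mul zero A.
Proof. move=> HN; exact: (@main_sec T add mul zero one HN n A). Qed.
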